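(* Consider the deadline-constrained data aggregation model described in the context, with sink deadline $D$ (a positive integer) and all sensor nodes being sources. Then the maximum value of $QoA$ achievable in an optimal aggregation tree is $2^D-1$, and the maximum value of $QoA$ achievable in the worst-case aggregation tree is $D$.
   Context: A wireless sensor network is a connected graph $\mathcal{G}=(\mathcal{V}\cup\{S\},\xi)$, where $S$ is the sink and $\mathcal{V}$ is the set of sensor nodes. Time is slotted, every transmission takes one slot, and the interference model is one-hop: two transmissions toward the same receiver in the same slot collide. Data aggregation is performed on a spanning tree $\psi$ of $\mathcal{G}$ rooted at $S$ (an aggregation tree). A schedule assigns to each participating sensor node $i$ a waiting time $W_i\in\{0,1,\dots,D-1\}$ (node $i$ transmits its aggregated data to its parent in slot $W_i$), and $W_S=D$. A schedule is feasible if, for every node $i$ (including $S$), the participating children of $i$ have pairwise distinct waiting times, all strictly smaller than $W_i$. Let $n_i=1$ if node $i$ participates and $n_i=0$ otherwise, and let $H^\psi(i)$ be the set consisting of $i$ and all its ancestors in $\psi$ other than $S$. With $F_i=1$ if $i$ is a source node and $F_i=0$ otherwise, the quality of aggregation is $QoA=\sum_{i\in\mathcal{V}}F_i\prod_{j\in H^\psi(i)}n_j$, the number of source nodes whose whole path to the sink participates. The maximum $QoA$ of a tree $\psi$ is the maximum of $QoA$ over all feasible schedules on $\psi$. ''Optimal tree'' and ''worst-case tree'' refer to the aggregation trees with the largest and smallest maximum $QoA$, respectively (the worst case being a chain rooted at the sink). *)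

(* Defs.v *)
From mathcomp Require Import all_boot.
Set Implicit Arguments. Unset Strict Implicit. Unset Printing Implicit Defensive.

Section WSN.
Variable T : finType.  (* node set V ∪ {S} *)
Variable s : T.

Definition connected_graph (e : rel T) : Prop :=
  symmetric e /\ irreflexive e /\ forall v, connect e s v.

(* A spanning tree of (T,e) rooted at s, given by its parent function:
   every non-sink node's parent is a neighbour, and following parents from
   any node reaches the sink (hence no cycles). *)
Definition spanning_tree (e : rel T) (par : {ffun T -> T}) : bool :=
  [&& par s == s,
      [forall v, (v != s) ==> e v (par v)] &
      [forall v, [exists k : 'I_#|T|.+1, iter k par v == s]]].

Definition anc (par : {ffun T -> T}) (i j : T) : bool :=
  [exists k : 'I_#|T|.+1, iter k par i == j].

(* feasible schedule: n = participation, W = waiting times (in {0..D-1}),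
   with W_S = D. *)
Definition Wrecv (D : nat) (W : {ffun T -> 'I_D}) (i : T) : nat :=
  if i == s then D else W i.

Definition feasible (D : nat) (par : {ffun T -> T})
    (n : {ffun T -> bool}) (W : {ffun T -> 'I_D}) : bool :=
  [forall j, ((j != s) && n j && ((par j == s) || n (par j))) ==>
               (W j < Wrecv W (par j))] &&
  [forall j, forall k,
     [&& j != s, k != s, j != k, n j, n k, par j == par k &
         ((par j == s) || n (par j))] ==> (W j != W k)].

(* QoA with all sensor nodes being sources (F_i = 1 for all i ∈ V):
   number of sensors whose whole path to the sink (excluding S) participates *)
Definition QoA (par : {ffun T -> T}) (n : {ffun T -> bool}) : nat :=
  #|[set i | (i != s) && [forall j, (anc par i j && (j != s)) ==> n j]]|.

Definition maxQoA (D : nat) (par : {ffun T -> T}) : nat :=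
  \max_(nW : {ffun T -> bool} * {ffun T -> 'I_D} | feasible par nW.1 nW.2)
     QoA par nW.1.

Definition optQoA (D : nat) (e : rel T) : nat :=
  \max_(par : {ffun T -> T} | spanning_tree e par) maxQoA D par.

(* chain rooted at the sink: every node has at most one child *)
Definition is_chain (par : {ffun T -> T}) : Prop :=
  forall u v, u != s -> v != s -> par u = par v -> u = v.

End WSN.

(* Main.v *)
Require Import Defs.
From mathcomp Require Import all_boot zify.
Set Implicit Arguments. Unset Strict Implicit. Unset Printing Implicit Defensive.

Lemma card_bigcup_le (I T : finType) (P : {set I}) (F : I -> {set T}) :
  #|\bigcup_(i in P) F i| <= \sum_(i in P) #|F i|.
Proof.
elim/big_rec2: _ => [|i y1 y2 _ H]; first by rewrite cards0.
apply: leq_trans (leq_card_setU _ _) _.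
by rewrite leq_add2l.
Qed.

Lemma geom2 k : (\sum_(i < k) 2 ^ i).+1 = 2 ^ k.
Proof.
elim: k => [|k IH]; first by rewrite big_ord0.
by rewrite big_ord_recr /= -addSn IH expnS mul2n addnn.
Qed.

Section Gen.
Variable T : finType.
Variable s : T.
Variable D : nat.
Variable par : {ffun T -> T}.
Variable n : {ffun T -> bool}.
Variable W : {ffun T -> 'I_D}.
Hypothesis pars : par s = s.
Hypothesis reach : forall v, exists k : 'I_#|T|.+1, iter k par v == s.
Hypothesis feas : feasible s par n W.

Definition C := [set i | (i != s) && [forall j, (anc par i j && (j != s)) ==> n j]].
Definition good x := (x == s) || (x \in C).
Definition w x := Wrecv s W x.
Definition Sb x := [set i in C | anc par i x].
Definition Ch x := [set c in C | par c == x].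

Lemma iter_s k : iter k par s = s.
Proof. exact: iter_fix. Qed.

Lemma anc_of_iter m i j : iter m par i = j -> j != s -> anc par i j.
Proof.
move=> Hm js; have [k0 /eqP Hk0] := reach i.
case: (leqP m #|T|) => Hle.
  by apply/existsP; exists (Ordinal (n:=#|T|.+1) (m:=m) Hle); apply/eqP.
have : k0 < m by apply: leq_trans (ltn_ord k0) Hle.
move=> lt; move: Hm; rewrite -(subnK (ltnW lt)) iterD Hk0 iter_s => Hs.
by rewrite -Hs eqxx in js.
Qed.

Lemma anc_iter i j : anc par i j -> exists m, iter m par i = j.
Proof. by case/existsP=> k /eqP H; exists k. Qed.

Lemma inC_n i : i \in C -> n i.
Proof.
rewrite inE => /andP[iNs /forallP H]; move: (H i); rewrite iNs andbT.
move/implyP; apply; apply/existsP; by exists ord0.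
Qed.

Lemma inC_neq i : i \in C -> i != s.
Proof. by rewrite inE => /andP[]. Qed.

Lemma inC_anc i j : i \in C -> anc par i j -> j != s -> j \in C.
Proof.
move=> iC /anc_iter [a Ha] js; rewrite inE js /=; apply/forallP => j'.
apply/implyP => /andP[/anc_iter [b Hb] j's].
move: iC; rewrite inE => /andP[_ /forallP /(_ j') /implyP]; apply.
rewrite j's andbT; apply: (anc_of_iter (m := b + a)) => //.
by rewrite iterD Ha.
Qed.

Lemma decomp x i : i \in Sb x -> i != x -> exists2 c, c \in Ch x & i \in Sb c.
Proof.
rewrite inE => /andP[iC Hanc] ix.
have ex : exists k, iter k par i == x by case/existsP: Hanc => k H; exists k.
case: (ex_minnP ex) => m /eqP Hm Hmin.
case: m Hm Hmin => [|m] Hm Hmin; first by rewrite /= in Hm; rewrite Hm eqxx in ix.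
set c := iter m par i.
have pc : par c = x by rewrite -Hm.
have cs : c != s.
  apply/negP => /eqP cs; have : m.+1 <= m; last by rewrite ltnn.
  by apply: Hmin; rewrite -/c cs -pc cs pars.
have ac : anc par i c by apply: anc_of_iter (erefl _) cs.
exists c; first by rewrite inE (inC_anc iC ac cs) pc eqxx.
by rewrite inE iC ac.
Qed.

Lemma Sb_sub x : Sb x :\ x \subset \bigcup_(c in Ch x) Sb c.
Proof.
apply/subsetP => i; rewrite inE => /andP[ix iS]; rewrite inE in ix.
have [c cCh icS] := decomp iS ix.
by apply/bigcupP; exists c.
Qed.

Lemma card_S x : #|Sb x :\ x| <= \sum_(c in Ch x) #|Sb c|.
Proof. exact: leq_trans (subset_leq_card (Sb_sub x)) (card_bigcup_le _ _). Qed.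

Lemma w_child x c : good x -> c \in Ch x -> w c < w x.
Proof.
move=> gx; rewrite inE => /andP[cC /eqP pc].
case/andP: feas => /forallP /(_ c) /implyP H _.
have := H; rewrite /w /Wrecv (negbTE (inC_neq cC)) pc; apply.
rewrite /= (inC_n cC) /=; case/orP: gx => [->//|/inC_n ->].
by rewrite orbT.
Qed.

Lemma W_inj x : good x -> {in Ch x &, injective W}.
Proof.
move=> gx c1 c2 H1 H2 HW; move: H1; rewrite inE => /andP[c1C /eqP p1]; move: H2; rewrite inE => /andP[c2C /eqP p2].
apply/eqP; apply: contraT => ne.
case/andP: feas => _ /forallP /(_ c1) /forallP /(_ c2) /implyP H.
have := H; rewrite HW eqxx; apply; rewrite (inC_neq c1C) (inC_neq c2C) ne.
rewrite (inC_n c1C) (inC_n c2C) p1 p2 eqxx /=.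
by case/orP: gx => [->//|/inC_n ->]; rewrite orbT.
Qed.

Lemma child_good x c : c \in Ch x -> good c.
Proof. by rewrite inE => /andP[cC _]; rewrite /good cC orbT. Qed.

Lemma child_good_C x c : c \in Ch x -> c \in C.
Proof. by rewrite inE => /andP[]. Qed.

Lemma w_le x : w x <= D.
Proof. by rewrite /w /Wrecv; case: (x == s) => //; apply: ltnW. Qed.

Lemma card_S1 c : #|Sb c| <= #|Sb c :\ c| + 1.
Proof. by rewrite (cardsD1 c) addnC leq_add2l leq_b1. Qed.

Lemma binom_bound m x : good x -> w x <= m -> (#|Sb x :\ x|).+1 <= 2 ^ (w x).
Proof.
elim: m x => [|m IH] x gx.
  rewrite leqn0 => /eqP wx0; rewrite wx0 expn0 ltnS leqn0 cards_eq0.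
  apply/eqP/setP => i; rewrite in_set0; apply/negP; rewrite inE => /andP[ix iS].
  rewrite inE in ix.
  have [c cCh _] := decomp iS ix.
  by have := w_child gx cCh; rewrite wx0.
move=> wxm; rewrite -geom2 ltnS; apply: leq_trans (card_S x) _.
have step : \sum_(c in Ch x) #|Sb c| <= \sum_(c in Ch x) 2 ^ (W c).
  apply: leq_sum => c cCh; apply: leq_trans (card_S1 c) _.
  rewrite addn1; have := IH c (child_good cCh).
  have cC : c \in C by move: cCh; rewrite inE => /andP[].
  have wc : w c = W c by rewrite /w /Wrecv (negbTE (inC_neq cC)).
  rewrite wc; apply; rewrite -wc -ltnS; exact: leq_trans (w_child gx cCh) wxm.
apply: leq_trans (step) _.
rewrite -(big_imset (fun v : 'I_D => 2 ^ v) (W_inj gx)) /=.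
apply: leq_trans (_ : \sum_(v : 'I_D | v < w x) 2 ^ v <= _); last first.
  by rewrite (big_ord_widen _ _ (w_le x)).
rewrite big_mkcond [X in _ <= X]big_mkcond /=.
apply: leq_sum => v _; case: ifP => // vin; rewrite ifT //.
case/imsetP: vin => c cCh ->; by have := w_child gx cCh; rewrite /w /Wrecv (negbTE (inC_neq (child_good_C cCh))).
Qed.

Lemma chain_bound (Hc : forall u v, u != s -> v != s -> par u = par v -> u = v) m x :
  good x -> w x <= m -> #|Sb x :\ x| <= w x.
Proof.
elim: m x => [|m IH] x gx.
  rewrite leqn0 => /eqP wx0; rewrite wx0 leqn0 cards_eq0.
  apply/eqP/setP => i; rewrite in_set0; apply/negP; rewrite inE => /andP[ix iS].
  rewrite inE in ix.
  have [c cCh _] := decomp iS ix.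
  by have := w_child gx cCh; rewrite wx0.
move=> wxm; apply: leq_trans (card_S x) _.
apply: leq_trans (_ : \sum_(c in Ch x) w x <= _).
  apply: leq_sum => c cCh; apply: leq_trans (card_S1 c) _.
  rewrite addn1; apply: leq_ltn_trans (w_child gx cCh).
  apply: IH (child_good cCh) _.
  by rewrite -ltnS; exact: leq_trans (w_child gx cCh) wxm.
rewrite sum_nat_const; apply: leq_trans (_ : 1 * w x <= _); last by rewrite mul1n.
rewrite leq_mul2r; apply/orP; right; apply/card_le1_eqP => c1 c2 H1 H2.
move: (child_good_C H1) (child_good_C H2) => c1C c2C.
move: H1 H2; rewrite !inE => /andP[_ /eqP p1] /andP[_ /eqP p2].
by apply: Hc; rewrite ?(inC_neq c1C) ?(inC_neq c2C) // p1 p2.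
Qed.

Lemma Sb_s : Sb s = C.
Proof.
apply/setP => i; rewrite inE; case iC: (i \in C) => //=.
have [k /eqP Hk] := reach i; apply/existsP; exists k; by rewrite Hk.
Qed.

Lemma QoA_C : QoA s par n = #|Sb s :\ s|.
Proof.
rewrite Sb_s (_ : QoA s par n = #|C|) // (cardsD1 s C).
have -> : (s \in C) = false by apply/negP => /inC_neq; rewrite eqxx.
by [].
Qed.

Lemma QoA_bound : QoA s par n <= 2 ^ D - 1.
Proof.
rewrite QoA_C -ltnS subn1 prednK ?expn_gt0 //.
have := binom_bound (m := D) (x := s); rewrite /w /Wrecv eqxx; apply => //.
by rewrite /good eqxx.
Qed.

Lemma QoA_chain (Hc : forall u v, u != s -> v != s -> par u = par v -> u = v) :
  QoA s par n <= D.
Proof.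
rewrite QoA_C; have := chain_bound Hc (m := D) (x := s).
by rewrite /w /Wrecv eqxx /good eqxx; apply.
Qed.

End Gen.

Section Chain.
Variable D' : nat.
Definition cT := 'I_D'.+2.
Definition cs : cT := ord0.
Definition cpar : {ffun cT -> cT} := [ffun i : cT => inord i.-1].
Definition cW : {ffun cT -> 'I_D'.+1} := [ffun i : cT => inord (D'.+1 - i)].
Definition ce : rel cT := fun u v => u != v.
Definition ctrue : {ffun cT -> bool} := [ffun _ => true].

Lemma cpar_val (i : cT) : nat_of_ord (cpar i) = i.-1.
Proof. by rewrite ffunE /= inordK //; have := ltn_ord i; lia. Qed.

Lemma citer k (i : cT) : nat_of_ord (iter k cpar i) = i - k.
Proof. by elim: k => [|k IH]; rewrite ?subn0 //= cpar_val IH subnS. Qed.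

Lemma c_conn : connected_graph cs ce.
Proof.
split; first by move=> u v; rewrite /ce eq_sym.
split; first by move=> u; rewrite /ce eqxx.
move=> v; case: (eqVneq cs v) => [->|ne]; first exact: connect0.
by apply: connect1.
Qed.

Lemma c_span : spanning_tree cs ce cpar.
Proof.
apply/and3P; split.
- by apply/eqP/val_inj; rewrite /= cpar_val.
- apply/forallP => v; apply/implyP => vs; rewrite /ce.
  apply/eqP => /(congr1 (@nat_of_ord _)); rewrite cpar_val.
  have : nat_of_ord v != 0 by move: vs; apply: contra => /eqP H; apply/eqP/val_inj.
  lia.
- apply/forallP => v; apply/existsP.
  have lt : nat_of_ord v < #|cT|.+1 by rewrite card_ord; have := ltn_ord v; lia.
  exists (Ordinal lt); apply/eqP/val_inj; rewrite /= citer subnn.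
  by [].
Qed.

Lemma c_chain : is_chain cs cpar.
Proof.
move=> u v us vs /(congr1 (@nat_of_ord _)); rewrite !cpar_val => H.
have u0 : nat_of_ord u != 0 by move: us; apply: contra => /eqP H'; apply/eqP/val_inj.
have v0 : nat_of_ord v != 0 by move: vs; apply: contra => /eqP H'; apply/eqP/val_inj.
apply/val_inj; rewrite /=; lia.
Qed.

Lemma cW_val (i : cT) : i != cs -> nat_of_ord (cW i) = D'.+1 - i.
Proof.
move=> is0; rewrite ffunE /= inordK //.
have : nat_of_ord i != 0 by move: is0; apply: contra => /eqP H'; apply/eqP/val_inj.
have := ltn_ord i; lia.
Qed.

Lemma c_feas : feasible cs cpar ctrue cW.
Proof.
apply/andP; split.
- apply/forallP => j; apply/implyP => /andP[/andP[js _] _].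
  rewrite /Wrecv; case: ifP => [_|/negbT pjs]; first exact: ltn_ord.
  rewrite cW_val // cW_val //.
  have j0 : nat_of_ord j != 0 by move: js; apply: contra => /eqP H'; apply/eqP/val_inj.
  have pj0 : nat_of_ord (cpar j) != 0 by move: pjs; apply: contra => /eqP H'; apply/eqP/val_inj.
  move: pj0; rewrite cpar_val; have := ltn_ord j; lia.
- apply/forallP => j; apply/forallP => k; apply/implyP.
  case/and5P => js ks jk _ /andP[_ /andP[/eqP pjk _]].
  by rewrite (c_chain js ks pjk) eqxx in jk.
Qed.

Lemma c_QoA : QoA cs cpar ctrue = D'.+1.
Proof.
rewrite /QoA; transitivity #|[set~ cs]|; last by rewrite cardsC1 card_ord.
apply: eq_card => i; rewrite !inE andbC /=.
by have -> : [forall j, anc cpar i j && (j != cs) ==> ctrue j] by apply/forallP => j; rewrite ffunE implybT.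
Qed.

End Chain.

Section Bin.
Variable D' : nat.
Definition bT := {set 'I_D'.+1}.
Definition bs : bT := set0.
Definition mn (A : bT) : option 'I_D'.+1 := [pick i in A | [forall j in A, i <= j]].
Definition bpar : {ffun bT -> bT} := [ffun A => if mn A is Some i then A :\ i else A].
Definition bW : {ffun bT -> 'I_D'.+1} := [ffun A => if mn A is Some i then i else ord0].
Definition be : rel bT := fun u v => u != v.
Definition btrue : {ffun bT -> bool} := [ffun _ => true].

Lemma mn0 : mn set0 = None.
Proof. by rewrite /mn; case: pickP => // i; rewrite inE. Qed.

Lemma mnP A : A != set0 -> exists i, [/\ mn A = Some i, i \in A & forall j, j \in A -> i <= j].
Proof.
move=> /set0Pn [i0 i0A].
rewrite /mn; case: pickP => [i /andP[iA /forallP H]|none].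
  by exists i; split => // j jA; have := H j; rewrite jA.
exfalso; case: (arg_minnP (fun i : 'I_D'.+1 => (i : nat)) i0A) => i iA Hi.
move: (none i) => /negbT/negP; apply; apply/andP; split; first exact: iA.
by apply/forallP => j; apply/implyP => jA; apply: Hi.
Qed.

Lemma b_conn : connected_graph bs be.
Proof.
split; first by move=> u v; rewrite /be eq_sym.
split; first by move=> u; rewrite /be eqxx.
move=> v; case: (eqVneq bs v) => [->|ne]; first exact: connect0.
by apply: connect1.
Qed.

Lemma bpar0 : bpar bs = bs.
Proof. by rewrite ffunE mn0. Qed.

Lemma bpar_card (A : bT) : A != set0 -> #|bpar A| = #|A|.-1.
Proof.
case/mnP => i [H iA _]; rewrite ffunE H.
by rewrite (cardsD1 i A) iA.
Qed.

Lemma biter k (A : bT) : #|A| = k -> iter k bpar A = bs.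
Proof.
elim: k A => [|k IH] A HA.
  by apply/eqP; rewrite -cards_eq0 HA.
rewrite iterSr; apply: IH; rewrite bpar_card ?HA //.
by rewrite -card_gt0 HA.
Qed.

Lemma b_span : spanning_tree bs be bpar.
Proof.
apply/and3P; split.
- by rewrite bpar0.
- apply/forallP => v; apply/implyP => vs; rewrite /be.
  apply/eqP => /(congr1 (fun A : bT => #|A|)); rewrite bpar_card //.
  have : 0 < #|v| by rewrite card_gt0.
  lia.
- apply/forallP => v; apply/existsP.
  have lt : #|v| < #|bT|.+1.
    rewrite /bT -cardsT -powersetT card_powerset cardsT card_ord.
    apply: leq_trans (max_card v) _; rewrite card_ord.
    by have := ltn_expl D'.+1 (isT : 1 < 2); lia.
  by exists (Ordinal lt); rewrite biter.
Qed.

Lemma b_feas : feasible bs bpar btrue bW.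
Proof.
apply/andP; split.
- apply/forallP => j; apply/implyP => /andP[/andP[js _] _].
  have [i [Hj ij Hmin]] := mnP js.
  rewrite /Wrecv; case: ifP => [_|/negbT pjs]; first by rewrite ffunE Hj.
  have [i' [Hp i'p Hmin']] := mnP pjs.
  rewrite [bW j]ffunE [bW (bpar j)]ffunE Hj Hp.
  move: i'p; rewrite ffunE Hj !inE => /andP[ne i'j].
  have := Hmin _ i'j; rewrite leq_eqVlt => /orP[/eqP E|//].
  have E' : i' = i by apply: val_inj; rewrite /= E.
  by rewrite E' eqxx in ne.
- apply/forallP => j; apply/forallP => k; apply/implyP.
  case/and5P => js ks jk _ /andP[_ /andP[/eqP pjk _]].
  apply/negP => /eqP HW; move/negP: jk; apply; apply/eqP.
  have [a [Ha aj _]] := mnP js; have [b [Hb bk _]] := mnP ks.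
  move: HW pjk; rewrite !ffunE Ha Hb => ab; subst b => pjk.
  by rewrite -(setD1K aj) -(setD1K bk) pjk.
Qed.

Lemma b_QoA : QoA bs bpar btrue = 2 ^ D'.+1 - 1.
Proof.
rewrite /QoA; transitivity #|[set~ bs]|; last first.
  by rewrite cardsC1 /bT -cardsT -powersetT card_powerset cardsT card_ord subn1.
apply: eq_card => i; rewrite !inE andbC /=.
by have -> : [forall j, anc bpar i j && (j != bs) ==> btrue j] by apply/forallP => j; rewrite ffunE implybT.
Qed.

End Bin.

Theorem theorem1 (D : nat) : 0 < D ->
  (* optimal tree: over all networks, the best tree achieves at most,
     and in some network exactly, 2^D - 1 *)
  ((forall (T : finType) (s : T) (e : rel T),
      connected_graph s e -> optQoA s D e <= 2 ^ D - 1) /\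
   (exists (T : finType) (s : T) (e : rel T),
      connected_graph s e /\ optQoA s D e = 2 ^ D - 1)) /\
  (* worst-case tree (a chain rooted at the sink): at most, and for some
     network exactly, D *)
  ((forall (T : finType) (s : T) (e : rel T) (par : {ffun T -> T}),
      connected_graph s e -> spanning_tree s e par -> is_chain s par ->
      maxQoA s D par <= D) /\
   (exists (T : finType) (s : T) (e : rel T) (par : {ffun T -> T}),
      [/\ connected_graph s e, spanning_tree s e par, is_chain s par &
          maxQoA s D par = D])).
Proof.
move=> D0.
have ub : forall (T : finType) (s : T) (e : rel T),
    optQoA s D e <= 2 ^ D - 1.
  move=> T s e; apply/bigmax_leqP => par /and3P[/eqP ps _ /forallP R].
  apply/bigmax_leqP => [[nn WW]] /= F.
  apply: QoA_bound ps _ F => v; exact/existsP.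
have cb : forall (T : finType) (s : T) (e : rel T) (par : {ffun T -> T}),
      spanning_tree s e par -> is_chain s par -> maxQoA s D par <= D.
  move=> T s e par /and3P[/eqP ps _ /forallP R] Hc.
  apply/bigmax_leqP => [[nn WW]] /= F.
  apply: QoA_chain ps _ F _ => [v|]; [exact/existsP | exact: Hc].
case: D D0 ub cb => [//|D'] _ ub cb.
split; split.
- by move=> T s e _; apply: ub.
- exists (bT D'), (bs D'), (be (D':=D')); split; first exact: b_conn.
  apply/eqP; rewrite eqn_leq ub /=.
  apply: leq_trans (_ : maxQoA (bs D') D'.+1 (bpar D') <= _).
    rewrite -b_QoA.
    exact: (@leq_bigmax_cond _ (fun nW => feasible (bs D') (bpar D') nW.1 nW.2)
              (fun nW => QoA (bs D') (bpar D') nW.1) (btrue D', bW D') (b_feas D')).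
  exact: (@leq_bigmax_cond _ (fun par => spanning_tree (bs D') (be (D':=D')) par)
              (fun par => maxQoA (bs D') D'.+1 par) (bpar D') (b_span D')).
- by move=> T s e par _; apply: cb.
- exists (cT D'), (cs D'), (ce (D':=D')), (cpar D'); split.
  + exact: c_conn.
  + exact: c_span.
  + exact: (@c_chain D').
  + apply/eqP; rewrite eqn_leq (cb _ _ _ _ (c_span D') (@c_chain D')) /=.
    rewrite -{1}(c_QoA D').
    exact: (@leq_bigmax_cond _ (fun nW => feasible (cs D') (cpar D') nW.1 nW.2)
              (fun nW => QoA (cs D') (cpar D') nW.1) (ctrue D', cW D') (c_feas D')).
Qed.
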